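(* Let $G$ be a finite simple graph with $V(G)=\{1,\dots,n\}$, vertex weight function $w_1$, and an edge weight function $w$ taking only positive real values. Then $G$ is a forest if and only if $\phi_{(w,w_1)}(G,x)=\eta_{(w,w_1)}(G,x)$.
   Context: A vertex weight function $w_1$ assigns a real number (possibly $0$) to each vertex; induced subgraphs carry restricted weights. For $A\subseteq E(G)$, $w(A)=\prod_{e\in A}w(e)$. $\mu_w(G,x)=\sum_{M}(-1)^{|M|}|w(M)|^2x^{n-2|M|}$ over all matchings $M$ (including empty). $\eta_{(w,w_1)}(G,x)=\sum_{S\subseteq V(G)}(-1)^{|V(G)\setminus S|}\big(\prod_{v\in V(G)\setminus S}w_1(v)\big)\mu_w(G[S],x)$ with $G[S]$ the induced subgraph and $\mu_w$ of the empty graph equal to $1$. The weighted adjacency matrix $B=[b_{uv}]$ has $b_{uv}=w(e_{uv})$ if $uv$ is an edge and $u<v$, $b_{uu}=w_1(u)$, $b_{uv}=\overline{w(e_{vu})}$ if $vu$ is an edge and $u>v$, and $0$ otherwise; $\phi_{(w,w_1)}(G,x)=\det(xI-B)$. *)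

(* Defs.v *)
From HB Require Import structures.
From mathcomp Require Import all_boot all_order all_algebra.
Set Implicit Arguments. Unset Strict Implicit. Unset Printing Implicit Defensive.
Import Order.TTheory GRing.Theory Num.Theory.
Local Open Scope ring_scope.

(* A finite simple graph on vertex set 'I_n = {0..n-1} (relabelling of
   {1..n}) is an adjacency relation [e] that is symmetric and irreflexive. *)
Definition simple_graph (n : nat) (e : rel 'I_n) : Prop :=
  symmetric e /\ irreflexive e.

Definition graph_cycle (n : nat) (e : rel 'I_n) (c : seq 'I_n) : bool :=
  [&& (3 <= size c)%N, uniq c & cycle e c].

Definition forest (n : nat) (e : rel 'I_n) : Prop :=
  forall c : seq 'I_n, ~~ graph_cycle e c.

Definition is_edge (n : nat) (e : rel 'I_n) (m : {set 'I_n}) : bool :=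
  [exists u, exists v, e u v && (m == [set u; v])].

Definition matching_in (n : nat) (e : rel 'I_n) (S : {set 'I_n})
    (M : {set {set 'I_n}}) : bool :=
  [forall m in M, is_edge e m && (m \subset S)] &&
  [forall m1 in M, forall m2 in M, (m1 != m2) ==> [disjoint m1 & m2]].

Section Polys.
Variable R : realFieldType.
Variable n : nat.
Variable e : rel 'I_n.
(* edge weight function: w [set u; v] is the weight of the edge uv *)
Variable w : {set 'I_n} -> R.
Variable w1 : 'I_n -> R.

Definition mu_w (S : {set 'I_n}) : {poly R} :=
  \sum_(M : {set {set 'I_n}} | matching_in e S M)
     ((-1) ^+ #|M| * `|\prod_(m in M) w m| ^+ 2) *: 'X^((#|S| - 2 * #|M|)%N).

Definition eta_w : {poly R} :=
  \sum_(S : {set 'I_n})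
     ((-1) ^+ #|~: S| * \prod_(v in ~: S) w1 v) *: mu_w S.

(* weighted adjacency matrix B (weights real, so conjugation is trivial) *)
Definition wadj : 'M[R]_n :=
  \matrix_(u, v) (if u == v then w1 u
                  else if e u v then w [set u; v] else 0).

Definition phi_w : {poly R} := char_poly wadj.
End Polys.

(* Main.v *)
Require Import Defs.
From HB Require Import structures.
From mathcomp Require Import all_boot all_order all_algebra all_fingroup.
From mathcomp Require Import lra zify.
Set Implicit Arguments. Unset Strict Implicit. Unset Printing Implicit Defensive.
Import Order.TTheory GRing.Theory Num.Theory.
Local Open Scope ring_scope.

Lemma set2_eq (T : finType) (a b c d : T) :
  [set a; b] = [set c; d] -> (a = c /\ b = d) \/ (a = d /\ b = c).
Proof.
move=> E.
have Ha: a \in [set c; d] by rewrite -E set21.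
have Hb: b \in [set c; d] by rewrite -E set22.
have Hc: c \in [set a; b] by rewrite E set21.
have Hd: d \in [set a; b] by rewrite E set22.
move: Ha Hb Hc Hd; rewrite !inE.
by do 4! case/orP=> /eqP ?; subst; auto.
Qed.

Section Match.
Variables (n : nat) (e : rel 'I_n).
Hypothesis esym : symmetric e.
Hypothesis eirr : irreflexive e.

Definition supp (s : 'S_n) : {set 'I_n} := [set i | s i != i].
Definition invol (s : 'S_n) := [forall i, s (s i) == i].
Definition edgy (s : 'S_n) := [forall i, (s i != i) ==> e i (s i)].
Definition good s := invol s && edgy s.
Definition Mof (s : 'S_n) := [set [set i; s i] | i in supp s].
Definition fof (M : {set {set 'I_n}}) (i : 'I_n) :=
  odflt i [pick j | (j != i) && ([set i; j] \in M)].

Lemma edge_of S M m : matching_in e S M -> m \in M ->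
  exists u v, [/\ e u v, u != v, m = [set u; v] & m \subset S].
Proof.
case/andP=> /forall_inP H _ mM; case/andP: (H m mM) => /existsP[u /existsP[v /andP[euv /eqP->]]] sub.
exists u, v; split=> //; apply/negP=> /eqP E; move: euv; rewrite E.
by rewrite eirr.
Qed.

Lemma match_uniq S M i j k : matching_in e S M -> j != i -> k != i ->
  [set i; j] \in M -> [set i; k] \in M -> j = k.
Proof.
move=> HM ji ki jM kM; case/andP: HM => _ /forall_inP /(_ _ jM) /forall_inP /(_ _ kM).
case: eqP => [E _|_ /= D].
  case: (set2_eq E) => [[_ //]|[E1 E2]]; by move: ki; rewrite -E1 eqxx.
by move: D; rewrite -setI_eq0 => /eqP/setP/(_ i); rewrite !inE !eqxx.
Qed.

Lemma fofP S M i : matching_in e S M ->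
  (fof M i = i /\ forall j, j != i -> [set i; j] \notin M) \/
  (fof M i != i /\ [set i; fof M i] \in M).
Proof.
move=> HM; rewrite /fof; case: pickP => [j /andP[ji jM] | H]; [right | left] => //=.
split=> // j ji; apply/negP=> jM; move: (H j); by rewrite ji jM.
Qed.

Lemma fof_invol S M i : matching_in e S M -> fof M (fof M i) = i.
Proof.
move=> HM; case: (fofP i HM) => [[E _]|[ji jM]]; first by rewrite !E.
case: (fofP (fof M i) HM) => [[_ H]|[kj kM]].
  by move: (H i); rewrite eq_sym ji setUC jM => /(_ isT).
rewrite setUC in jM; apply: (match_uniq HM kj _ kM jM); by rewrite eq_sym.
Qed.

Definition pof M : 'S_n :=
  match injectiveP (fof M) with ReflectT inj => perm inj | ReflectF _ => 1%g end.

Lemma pofE S M : matching_in e S M -> pof M =1 fof M.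
Proof.
move=> HM i; rewrite /pof; case: injectiveP => [inj|ninj]; first by rewrite permE.
by case: ninj; apply: (can_inj (g:=fof M)) => j; apply: (fof_invol _ HM).
Qed.

Lemma pof_good S M : matching_in e S M ->
  [/\ good (pof M), supp (pof M) \subset S & Mof (pof M) = M].
Proof.
move=> HM; have PE := pofE HM.
split.
- apply/andP; split; first by apply/forallP=> i; rewrite !PE (fof_invol _ HM).
  apply/forallP=> i; apply/implyP; rewrite !PE => fi.
  case: (fofP i HM) => [[E _]|[_ iM]]; first by rewrite E eqxx in fi.
  have [u [v [euv _ E _]]] := edge_of HM iM.
  by case: (set2_eq E) => [[-> ->]|[-> ->]] //; rewrite esym.
- apply/subsetP=> i; rewrite inE PE => fi.
  case: (fofP i HM) => [[E _]|[_ iM]]; first by rewrite E eqxx in fi.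
  have [u [v [_ _ _ sub]]] := edge_of HM iM.
  by apply: (subsetP sub); rewrite set21.
- apply/setP=> m; apply/imsetP/idP => [[i]|mM].
    rewrite inE PE => fi ->.
    by case: (fofP i HM) => [[E _]|[_ iM //]]; rewrite E eqxx in fi.
  have [u [v [euv uv Em _]]] := edge_of HM mM; rewrite Em in mM *.
  case: (fofP u HM) => [[_ H]|[fu uM]].
    by move: (H v); rewrite eq_sym uv mM => /(_ isT).
  have vu : v != u by rewrite eq_sym.
  have Ev := match_uniq HM fu vu uM mM.
  exists u; first by rewrite inE PE.
  by rewrite PE Ev.
Qed.

Lemma involP s : invol s -> forall i, s (s i) = i.
Proof. by move=> /forallP H i; apply/eqP. Qed.

Lemma edgyP s : edgy s -> forall i, s i != i -> e i (s i).
Proof. by move=> /forallP H i; apply/implyP. Qed.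

Lemma pair_mem s i x : invol s -> x \in [set i; s i] -> [set x; s x] = [set i; s i].
Proof.
move=> /involP Hs; rewrite !inE => /orP[] /eqP -> //.
by rewrite Hs setUC.
Qed.

Lemma supp_s s i : invol s -> (s i \in supp s) = (i \in supp s).
Proof. by move=> Hi; rewrite !inE (involP Hi) eq_sym. Qed.

Lemma fof_Mof s : good s -> fof (Mof s) =1 s.
Proof.
case/andP=> Hi He i; rewrite /fof; case: pickP => [j /andP[ji /imsetP[k k_supp E]]|H] /=.
  case: (set2_eq E) => [[-> ->] //|[-> ->]]; by rewrite (involP Hi).
case: (eqVneq (s i) i) => [-> //|si].
by move: (H (s i)); rewrite si /= (imset_f (fun i => [set i; s i])) // inE si.
Qed.

Lemma Mof_matching S s : good s -> matching_in e S (Mof s) = (supp s \subset S).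
Proof.
case/andP=> Hi He; apply/idP/idP.
  case/andP=> /forall_inP H _; apply/subsetP=> i isupp.
  have /andP[_ sub] := H _ (imset_f (fun i => [set i; s i]) isupp).
  by apply: (subsetP sub); rewrite set21.
move=> sub; apply/andP; split.
  apply/forall_inP=> m /imsetP[i isupp ->]; apply/andP; split.
    apply/existsP; exists i; apply/existsP; exists (s i); rewrite eqxx andbT.
    by apply: (edgyP He); rewrite inE in isupp.
  apply/subsetP=> x; rewrite !inE => /orP[] /eqP ->; apply: (subsetP sub) => //.
  by rewrite supp_s.
apply/forall_inP=> m1 /imsetP[i _ ->]; apply/forall_inP=> m2 /imsetP[j _ ->].
apply/implyP; apply: contraR; rewrite -setI_eq0 => /set0Pn[x]; rewrite inE => /andP[x1 x2].
by rewrite -(pair_mem Hi x1) -(pair_mem Hi x2).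
Qed.

Lemma pof_Mof (S : {set 'I_n}) s : good s -> supp s \subset S -> pof (Mof s) = s.
Proof.
move=> Hg sub; apply/permP=> i.
by rewrite (pofE (S:=S)) ?Mof_matching // fof_Mof.
Qed.

Lemma reindex_match (V : nmodType) S (F : {set {set 'I_n}} -> V) :
  \sum_(M | matching_in e S M) F M =
  \sum_(s | good s && (supp s \subset S)) F (Mof s).
Proof.
rewrite (reindex_onto (@Mof) (@pof)); last by move=> M HM; case: (pof_good HM).
apply: eq_bigl => s; apply/idP/idP.
  case/andP=> HM /eqP E; have [g sub _] := pof_good HM; rewrite -E; apply/andP; split => //.
case/andP=> g sub; by rewrite Mof_matching // sub (pof_Mof g sub) eqxx.
Qed.
End Match.

Section Perm.
Variable n : nat.
Implicit Types s : 'S_n.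

Lemma porbit_fix s x : s x = x -> porbit s x = [set x].
Proof.
move=> sx; apply/setP=> y; rewrite inE; apply/porbitP/eqP => [[k ->]|->].
  by rewrite permX; elim: k => //= k ->.
by exists 0%N; rewrite expg0 perm1.
Qed.

Lemma porbit_invol s x : s (s x) = x -> porbit s x = [set x; s x].
Proof.
move=> ssx; apply/setP=> y; rewrite !inE; apply/porbitP/idP => [[k ->]|/orP[]/eqP->].
- rewrite permX; have: iter k s x = if odd k then s x else x.
    by elim: k => //= k ->; case: (odd k) => //=.
  by move->; case: (odd k); rewrite eqxx ?orbT.
- by exists 0%N; rewrite expg0 perm1.
- by exists 1%N; rewrite expg1.
Qed.

Lemma card_porbits s : #|porbits s| = (#|~: supp s| + #|porbit s @: supp s|)%N.
Proof.
have E : porbits s = porbit s @: (~: supp s) :|: porbit s @: supp s.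
  rewrite /porbits -imsetU setUC setUCr; apply/setP=> A.
  by apply/imsetP/imsetP=> -[x _ ->]; exists x; rewrite ?inE.
have E1 : porbit s @: (~: supp s) = set1 @: (~: supp s).
  by apply: eq_in_imset => x; rewrite !inE negbK => /eqP /porbit_fix.
rewrite E cardsU E1 card_imset; last exact: set1_inj.
suff -> : set1 @: (~: supp s) :&: porbit s @: supp s = set0 by rewrite cards0 subn0.
apply/setP=> A; rewrite !inE; apply/negP=> /andP[/imsetP[y ysupp ->] /imsetP[x xsupp Ex]].
have : x \in [set y] by rewrite Ex porbit_id.
rewrite inE => /eqP exy; move: ysupp xsupp; rewrite !inE exy => /negP H /H [].

Qed.

Lemma fiber s m : invol s -> m \in Mof s ->
  forall i, ((i \in supp s) && ([set i; s i] == m)) = (i \in m).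
Proof.
move=> Hi /imsetP[k ksupp ->] i; apply/idP/idP => [/andP[_ /eqP <-]|im].
  by rewrite set21.
rewrite (pair_mem Hi im) eqxx andbT.
by case/set2P: im => ->; rewrite ?supp_s.
Qed.

Lemma big_invol (R : Type) (idx : R) (op : Monoid.com_law idx) s (F : {set 'I_n} -> R) :
  invol s ->
  \big[op/idx]_(i in supp s) F [set i; s i] = \big[op/idx]_(m in Mof s) op (F m) (F m).
Proof.
move=> Hi; rewrite (partition_big (fun i => [set i; s i]) (mem (Mof s))); last first.
  by move=> i isupp; rewrite inE (imset_f (fun i => [set i; s i])).
apply: eq_bigr => m mM.
rewrite (eq_bigr (fun _ => F m)) => [|i /andP[_ /eqP->] //].
rewrite (eq_bigl (mem m)) => [|i]; last by rewrite (fiber Hi mM).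
case/imsetP: mM => k ksupp ->.
have nk : k \notin [set s k] by rewrite inE eq_sym; rewrite inE in ksupp.
by rewrite big_setU1 //= big_set1.
Qed.

Lemma card_supp_invol s : invol s -> #|supp s| = (2 * #|Mof s|)%N.
Proof.
move=> Hi; rewrite -sum1_card (big_invol addn (fun _ => 1%N) Hi).
by rewrite sum_nat_const mulnC.
Qed.

Lemma odd_invol s : invol s -> odd_perm s = odd #|Mof s|.
Proof.
move=> Hi; rewrite /odd_perm card_porbits.
have -> : porbit s @: supp s = Mof s.
  by apply: eq_in_imset => x _; rewrite porbit_invol // (involP Hi).
have -> : odd #|'I_n| = odd (#|supp s| + #|~: supp s|) by rewrite cardsC.
rewrite card_supp_invol // !oddD.
by case: (odd #|Mof s|); case: (odd #|~: supp s|).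
Qed.

Lemma odd_cycle s x : supp s = porbit s x -> x \in supp s ->
  odd_perm s = ~~ odd #|supp s|.
Proof.
move=> E xs; rewrite /odd_perm card_porbits.
have -> : porbit s @: supp s = [set supp s].
  apply/setP=> A; rewrite inE; apply/imsetP/eqP => [[y ys ->]|->].
    by rewrite E; apply/eqP; rewrite eq_porbit_mem -E.
  by exists x; rewrite // E.
have -> : odd #|'I_n| = odd (#|supp s| + #|~: supp s|) by rewrite cardsC.
rewrite cards1 !oddD /=.
by case: (odd _); case: (odd _).
Qed.
End Perm.

Section Poly.
Variables (R : realFieldType) (n : nat) (w1 : 'I_n -> R).

Definition Q (D : {set 'I_n}) : {poly R} := \prod_(i in ~: D) ('X - (w1 i)%:P).

Lemma expand (D : {set 'I_n}) :
  \sum_(S : {set 'I_n}) (if D \subset S then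
     ((-1) ^+ #|~: S| * \prod_(v in ~: S) w1 v) *: 'X^(#|S| - #|D|) else 0)
  = Q D.
Proof.
have -> : Q D = \prod_i ((if i \in D then 1 else 'X) + (if i \in D then 0 else - (w1 i)%:P)).
  rewrite /Q big_mkcond /=; apply: eq_bigr => i _; rewrite inE.
  by case: (i \in D); rewrite ?addr0.
rewrite bigA_distr; apply: eq_bigr => S _.
case: (boolP (D \subset S)) => [sub|nsub].
  rewrite [RHS](bigID (fun i => i \in S)) /=.
  rewrite (eq_bigr (fun i => if i \in D then 1 else 'X)); last by move=> i iS; rewrite iS.
  rewrite [X in _ = _ * X](eq_bigr (fun i => - (w1 i)%:P)); last first.
    move=> i iS; rewrite (negbTE iS).
    by have -> : (i \in D) = false by apply: contraNF iS; apply: (subsetP sub).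
  rewrite (eq_bigr (fun i => if i \notin D then 'X else 1)) => [|i _]; last by rewrite if_neg.
  rewrite -big_mkcondr /= [X in _ = X * _](eq_bigl (mem (S :\: D))) => [|i]; last by rewrite !inE andbC.
  rewrite prodr_const cardsD (setIidPr sub).
  rewrite [X in _ = _ * X](eq_bigl (mem (~: S))) => [|i]; last by rewrite !inE.
  rewrite prodrN -(rmorph_prod (@polyC R)) -mul_polyC rmorphM rmorph_sign.
  by rewrite mulrC mulrA.
case/subsetPn: nsub => i iD iS.
by rewrite (bigD1 i) //= iD (negbTE iS) mul0r.
Qed.

Variables (e : rel 'I_n) (w : {set 'I_n} -> R).

Definition kk (s : 'S_n) : R :=
  (-1) ^+ s * \prod_(i in supp s) - (wadj e w w1 i (s i)).

Lemma phi_sum : phi_w e w w1 = \sum_(s : 'S_n) kk s *: Q (supp s).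
Proof.
rewrite /phi_w /char_poly /determinant; apply: eq_bigr => s _.
rewrite (bigID (fun i => s i == i)) /=.
rewrite (eq_bigr (fun i => 'X - (w1 i)%:P)); last first.
  by move=> i /eqP si; rewrite !mxE si eqxx.
rewrite [X in _ * (_ * X)](eq_bigr (fun i => (- wadj e w w1 i (s i))%:P)); last first.
  by move=> i si; rewrite !mxE eq_sym (negbTE si) mulr0n sub0r rmorphN.
rewrite -(rmorph_prod (@polyC R)).
rewrite [X in _ * (X * _) = _](eq_bigl (mem (~: supp s))) => [|i]; last by rewrite !inE negbK.
rewrite [X in _ * (_ * X%:P) = _](eq_bigl (mem (supp s))) => [|i]; last by rewrite !inE.
rewrite /kk /Q.
rewrite -mul_polyC rmorphM rmorph_sign.
by rewrite -mulrA; congr (_ * _); rewrite mulrC.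
Qed.

Hypothesis esym : symmetric e.
Hypothesis eirr : irreflexive e.

Lemma kk_good s : good e s ->
  kk s = (-1) ^+ #|Mof s| * `|\prod_(m in Mof s) w m| ^+ 2.
Proof.
case/andP=> Hi He; rewrite /kk.
rewrite (eq_bigr (fun i => - w [set i; s i])); last first.
  by move=> i; rewrite inE => si; rewrite !mxE eq_sym (negbTE si) (edgyP He si).
rewrite prodrN (@big_invol _ R 1 *%R _ (fun m => w m) Hi) card_supp_invol //.
rewrite [(-1) ^+ (2 * _)]exprM sqrrN !expr1n mul1r odd_invol // signr_odd.
by rewrite real_normK ?num_real // expr2 big_split.
Qed.

Lemma eta_sum : eta_w e w w1 = \sum_(s | good e s) kk s *: Q (supp s).
Proof.
rewrite /eta_w /mu_w.
under eq_bigr => S _ do rewrite (reindex_match esym eirr) scaler_sumr big_mkcond.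
rewrite exchange_big [RHS]big_mkcond; apply: eq_bigr => s _ /=.
case: (boolP (good e s)) => g /=; last by rewrite big1.
rewrite -expand scaler_sumr; apply: eq_bigr => S _.
case: (supp s \subset S) => //=; last by rewrite scaler0.
rewrite -(card_supp_invol (n:=n)); last by case/andP: g.
by rewrite kk_good // !scalerA mulrC.
Qed.
End Poly.

Section Cyc.
Variables (n : nat) (e : rel 'I_n).
Hypothesis esym : symmetric e.
Hypothesis eirr : irreflexive e.

Lemma porbit_moved (s : 'S_n) x y : s (s x) != x -> y \in porbit s x -> s y != y.
Proof.
move=> ssx yx; apply/negP=> /eqP sy.
have : x \in porbit s y by rewrite porbit_sym.
rewrite porbit_fix // inE => /eqP xy; rewrite xy sy sy eqxx in ssx.
by [].
Qed.

Lemma porbit_sub_supp (s : 'S_n) x : s (s x) != x -> porbit s x \subset supp s.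
Proof. by move=> ssx; apply/subsetP=> y yx; rewrite inE (porbit_moved ssx yx). Qed.

Lemma orbit_cycle (s : 'S_n) x : edgy e s -> s (s x) != x ->
  graph_cycle e (traject s x #|porbit s x|).
Proof.
move=> He ssx; apply/and3P; split.
- rewrite size_traject.
  have sx : s x != x by apply/eqP => Ex; rewrite Ex Ex eqxx in ssx.
  have U : uniq [:: x; s x; s (s x)].
    rewrite /= !inE negb_or eq_sym sx eq_sym ssx /=.
    by rewrite (inj_eq perm_inj) eq_sym sx.
  have := uniq_leq_size U; rewrite /= => H.
  rewrite -(size_traject s x #|porbit s x|); apply: H => y; rewrite !inE -porbit_traject.
  case/or3P=> /eqP->; first exact: porbit_id.
    have -> : s x = (s ^+ 1)%g x by rewrite permX.
    exact: mem_porbit.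
  have -> : s (s x) = (s ^+ 2)%g x by rewrite permX.
  exact: mem_porbit.
- exact: uniq_traject_porbit.
case E: #|porbit s x| (card_porbit_neq0 s x) => [//|k] _.
rewrite trajectS /=.
have -> : rcons (traject s (s x) k) x = traject s (s x) k.+1.
  by rewrite trajectSr -iterSr -E iter_porbit.
apply: (@sub_in_path _ (mem (porbit s x)) (frel s)); last exact: fpath_traject.
  move=> y z yx _ /eqP <-; exact: (edgyP He (porbit_moved ssx yx)).
apply/allP=> y; rewrite -trajectS => /trajectP[i _ ->].
rewrite -permX; exact: (mem_porbit s i x).
Qed.
End Cyc.

Section Main.
Variables (R : realFieldType) (n : nat) (e : rel 'I_n)
    (w : {set 'I_n} -> R) (w1 : 'I_n -> R).
Hypothesis esym : symmetric e.
Hypothesis eirr : irreflexive e.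
Hypothesis wpos : forall u v : 'I_n, e u v -> 0 < w [set u; v].

Lemma kk0 s : ~~ edgy e s -> kk w1 e w s = 0.
Proof.
rewrite /edgy negb_forall => /existsP[i]; rewrite negb_imply => /andP[si nei].
rewrite /kk (bigD1 i) ?inE //= !mxE eq_sym (negbTE si) (negbTE nei).
by rewrite oppr0 mul0r mulr0.
Qed.

Lemma kk_cycle s x : edgy e s -> supp s = porbit s x -> x \in supp s ->
  kk w1 e w s < 0.
Proof.
move=> He E xs; rewrite /kk.
rewrite (eq_bigr (fun i => - w [set i; s i])); last first.
  by move=> i; rewrite inE => si; rewrite !mxE eq_sym (negbTE si) (edgyP He si).
rewrite prodrN (odd_cycle E xs).
have P : 0 < \prod_(i in supp s) w [set i; s i].
  by apply: prodr_gt0 => i; rewrite inE => si; apply: wpos; apply: (edgyP He si).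
rewrite -(signr_odd _ #|supp s|).
by case: (odd #|supp s|) => /=; rewrite ?expr0 ?expr1; lra.
Qed.

Lemma diff_sum : phi_w e w w1 - eta_w e w w1 =
  \sum_(s | ~~ good e s) kk w1 e w s *: Q w1 (supp s).
Proof.
by rewrite (phi_sum w1 e w) (eta_sum w1 w esym eirr) (bigID (good e)) /= addrC addrK.
Qed.

Lemma sizeQ D : size (Q w1 D) = (#|~: D|).+1.
Proof. by rewrite /Q -big_enum size_prod_XsubC cardE. Qed.

Lemma monicQ D : Q w1 D \is monic.
Proof. by rewrite /Q -big_enum monic_prod_XsubC. Qed.
End Main.

Unset Implicit Arguments.
Theorem corollary2p10 (R : realFieldType) (n : nat) (e : rel 'I_n)
    (w : {set 'I_n} -> R) (w1 : 'I_n -> R) :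
  simple_graph e ->
  (forall u v : 'I_n, e u v -> 0 < w [set u; v]) ->
  (forest e <-> phi_w e w w1 = eta_w e w w1).
Proof.
case=> esym eirr wpos; split.
  move=> F; apply/eqP; rewrite -subr_eq0 (diff_sum w w1 esym eirr); apply/eqP.
  apply: big1 => s ng.
  case: (boolP (edgy e s)) => He; last by rewrite (kk0 w w1) // scale0r.
  have : ~~ invol s by move: ng; rewrite /good He andbT.
  rewrite /invol negb_forall => /existsP[x ssx].
  by move: (F (traject s x #|porbit s x|)); rewrite (orbit_cycle He ssx).
move=> Heq c; apply/negP => Gc.
pose P k := [exists t : k.-tuple 'I_n, graph_cycle e t].
have PS : forall cs, graph_cycle e cs -> P (size cs).
  by move=> cs H; apply/existsP; exists (in_tuple cs).
have exP : exists k, P k by exists (size c); exact: PS.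
case: (ex_minnP exP) => g /existsP[c0 Gc0] gmin.
set N := (n - g)%N.
have T : forall s, ~~ good e s -> edgy e s -> exists x,
    [/\ s (s x) != x, (g <= #|supp s|)%N &
        (#|supp s| = g -> supp s = porbit s x /\ x \in supp s)].
  move=> s ng He.
  have : ~~ invol s by move: ng; rewrite /good He andbT.
  rewrite /invol negb_forall => /existsP[x ssx]; exists x.
  have sub := porbit_sub_supp ssx.
  have gk : (g <= #|porbit s x|)%N.
    by apply: gmin; rewrite -(size_traject s x #|porbit s x|); apply: PS; apply: orbit_cycle.
  have le := subset_leq_card sub.
  split => //; first exact: leq_trans gk le.
  move=> Eg; have Es : supp s = porbit s x.
    apply/eqP; rewrite eq_sym eqEcard sub /=; rewrite Eg //.
  by split => //; rewrite Es porbit_id.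
have cardC : forall s : 'S_n, #|~: supp s| = (n - #|supp s|)%N.
  by move=> s; have := cardsC (supp s); rewrite card_ord; lia.
have Tle : forall s, ~~ good e s -> (kk w1 e w s *: Q w1 (supp s))`_N <= 0.
  move=> s ng; rewrite coefZ.
  case: (boolP (edgy e s)) => He; last by rewrite (kk0 w w1) // mul0r.
  have [x [ssx gs Hg]] := T s ng He.
  case: (ltngtP g #|supp s|) gs => // [lt|eq] _.
    rewrite nth_default ?mulr0 // sizeQ cardC /N.
    by have := cardsC (supp s); rewrite card_ord; lia.
  have [Es xs] := Hg (sym_eq eq).
  have <- : lead_coef (Q w1 (supp s)) = (Q w1 (supp s))`_N.
    by rewrite lead_coefE sizeQ cardC -eq.
  rewrite (monicP (monicQ _ _)) mulr1; apply: ltW; exact: (kk_cycle w1 wpos He Es xs).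
have Tlt : forall s, ~~ good e s -> edgy e s -> #|supp s| = g ->
    (kk w1 e w s *: Q w1 (supp s))`_N < 0.
  move=> s ng He Eg; rewrite coefZ.
  have [x [ssx gs Hg]] := T s ng He.
  have [Es xs] := Hg Eg.
  have <- : lead_coef (Q w1 (supp s)) = (Q w1 (supp s))`_N.
    by rewrite lead_coefE sizeQ cardC Eg.
  rewrite (monicP (monicQ _ _)) mulr1; exact: (kk_cycle w1 wpos He Es xs).
case/and3P: Gc0 => sz0 Uc0 cyc0.
have [x0 nx0] : exists x, next c0 (next c0 x) != x.
  move: sz0 (Uc0); case: (tval c0) => [|a [|b [|c1 r]]] //= _ U.
  exists a; case/and4P: U; rewrite !inE => /norP[ab /norP[ac _]] _ _ _.
  have ba : (b == a) = false by rewrite eq_sym (negbTE ab).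
  by rewrite eqxx ba eqxx eq_sym.
pose s0 : 'S_n := perm (can_inj (prev_next Uc0)).
have s0E : forall x, s0 x = next c0 x by move=> x; rewrite permE.
have supp0 : supp s0 = [set x | x \in c0].
  apply/setP=> x; rewrite !inE s0E; case: (boolP (x \in c0)) => xc.
    have := next_cycle cyc0 xc; apply: contraTneq => ->; by rewrite eirr.
  by rewrite next_nth (negbTE xc) eqxx.
have card0 : #|supp s0| = g.
  by rewrite supp0 cardsE (card_uniqP Uc0) size_tuple.
have He0 : edgy e s0.
  apply/forallP=> x; apply/implyP; rewrite s0E => nx.
  have xc : x \in c0 by apply: contraR nx => xc; rewrite next_nth (negbTE xc).
  exact: next_cycle.
have ng0 : ~~ good e s0.
  rewrite /good He0 andbT /invol negb_forall; apply/existsP; exists x0.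
  by rewrite !s0E.
have H0 : (phi_w e w w1 - eta_w e w w1)`_N = 0 by rewrite Heq subrr coef0.
move: H0; rewrite (diff_sum w w1 esym eirr) coef_sum (bigD1 s0) //=.
have := Tlt s0 ng0 He0 card0.
have : \sum_(s | ~~ good e s && (s != s0)) (kk w1 e w s *: Q w1 (supp s))`_N <= 0.
  by apply: sumr_le0 => s /andP[ng _]; apply: Tle.
lra.
Qed.
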